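(* Any quantum algorithm which takes an $n\times n$ permutation matrix as input (with oracle access to its entries) and outputs the sign of the permutation matrix has query complexity at least $\Omega(n^{3/2})$.
   Context: A permutation matrix is a Boolean $n\times n$ matrix with exactly one entry $1$ in each row and each column; its entries equal to $1$ are at positions $(i,\pi(i))$ for a permutation $\pi$, and its sign is the sign of $\pi$. *)

(* Defs.v *)
From HB Require Import structures.
From mathcomp Require Import all_boot all_order all_algebra all_fingroup all_field.
Set Implicit Arguments. Unset Strict Implicit. Unset Printing Implicit Defensive.
Import Order.TTheory GRing.Theory Num.Theory.
Local Open Scope ring_scope.

(* Basis of the Hilbert space: query register (i, j) for entry (i,j) of an
   n x n Boolean matrix, an answer bit, and a workspace register of size m. *)
Definition qbasis (n m : nat) : finType := ('I_n * 'I_n * bool * 'I_m)%type.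

Definition qop (S : finType) := S -> S -> algC.
Definition qvec (S : finType) := S -> algC.

Definition qapply (S : finType) (M : qop S) (v : qvec S) : qvec S :=
  fun s => \sum_(t : S) M s t * v t.

Definition qunitary (S : finType) (M : qop S) : Prop :=
  forall s t : S, \sum_(u : S) (M u s)^* * M u t = (s == t)%:R.

Definition qbasis_vec (S : finType) (s0 : S) : qvec S := fun s => (s == s0)%:R.

Definition oracle_flip n m (x : 'I_n -> 'I_n -> bool) (t : qbasis n m)
  : qbasis n m :=
  let: (i, j, b, w) := t in (i, j, b (+) x i j, w).

Definition qoracle n m (x : 'I_n -> 'I_n -> bool) : qop (qbasis n m) :=
  fun s t => (s == oracle_flip x t)%:R.

Fixpoint qrun n m (U : nat -> qop (qbasis n m)) (s0 : qbasis n m)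
  (x : 'I_n -> 'I_n -> bool) (k : nat) : qvec (qbasis n m) :=
  match k with
  | 0 => qapply (U 0%N) (qbasis_vec s0)
  | k'.+1 => qapply (U k) (qapply (@qoracle n m x) (qrun U s0 x k'))
  end.

Definition qprob n m (U : nat -> qop (qbasis n m)) (s0 : qbasis n m)
  (out : qbasis n m -> bool) (x : 'I_n -> 'I_n -> bool) (T : nat) (b : bool)
  : algC :=
  \sum_(s : qbasis n m | out s == b) `|qrun U s0 x T s| ^+ 2.

Definition perm_matrix n (p : 'S_n) : 'I_n -> 'I_n -> bool :=
  fun i j => p i == j.

(* A T-query algorithm (workspace size m, unitaries U 0..U T, initial basis
   state s0, output labelling out) computes the sign of permutation matrices
   with bounded error 1/3: output bit = odd_perm p (true iff sign is -1). *)
Definition computes_perm_sign n m (T : nat) (U : nat -> qop (qbasis n m))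
  (s0 : qbasis n m) (out : qbasis n m -> bool) : Prop :=
  (forall k, (k <= T)%N -> qunitary (U k)) /\
  forall p : 'S_n, 2%:R / 3%:R <= qprob U s0 out (perm_matrix p) T (odd_perm p).

(* Main.v *)
Require Import Defs.
From HB Require Import structures.
From mathcomp Require Import all_boot all_order all_algebra all_fingroup all_field.
From mathcomp Require Import ring zify.
Import Order.TTheory GRing.Theory Num.Theory.
Set Implicit Arguments. Unset Strict Implicit. Unset Printing Implicit Defensive.
Local Open Scope ring_scope.

Lemma amgm (a b l : algC) : 0 <= a -> 0 <= b -> 0 < l ->
  2 * (a * b) <= l * a ^+ 2 + l^-1 * b ^+ 2.
Proof.
move=> a0 b0 l0; rewrite -subr_ge0.
have lnz : l != 0 by rewrite gt_eqF.
have -> : l * a ^+ 2 + l^-1 * b ^+ 2 - 2 * (a * b) = l^-1 * (l * a - b) ^+ 2.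
  by field.
apply: mulr_ge0; first by rewrite invr_ge0 ltW.
rewrite -realEsqr rpredB // ?rpredM // ger0_real // ltW //.
Qed.

Definition ip (S : finType) (v w : qvec S) : algC := \sum_s (v s)^* * w s.
Definition nrm (S : finType) (v : qvec S) : algC := \sum_s `|v s| ^+ 2.

Lemma ip_self (S : finType) (v : qvec S) : ip v v = nrm v.
Proof. by apply: eq_bigr => s _; rewrite normCK mulrC. Qed.


Lemma ip_unitary (S : finType) (M : qop S) v w : qunitary M ->
  ip (qapply M v) (qapply M w) = ip v w.
Proof.
move=> uM; rewrite /ip /qapply.
transitivity (\sum_u \sum_s \sum_t ((v s)^* * w t) * ((M u s)^* * M u t)).
  apply: eq_bigr => u _; rewrite rmorph_sum /= big_distrl /=; apply: eq_bigr => s _.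
  rewrite big_distrr /=; apply: eq_bigr => t _; rewrite rmorphM /=; ring.
rewrite exchange_big /=; apply: eq_bigr => s _.
rewrite exchange_big /= (bigD1 s) //=.
rewrite -big_distrr /= uM eqxx mulr1 big1 ?addr0 // => t ts.
by rewrite -big_distrr /= uM eq_sym (negbTE ts) mulr0.
Qed.

Lemma flipK n m x : involutive (@oracle_flip n m x).
Proof. by case=> [[[i j] b] w] /=; rewrite addbK. Qed.

Lemma flip_ij n m x (s : qbasis n m) : (oracle_flip x s).1.1 = s.1.1.
Proof. by case: s => [[[i j] b] w]. Qed.

Lemma qapply_oracle n m x (v : qvec (qbasis n m)) s :
  qapply (qoracle x) v s = v (oracle_flip x s).
Proof.
rewrite /qapply /qoracle (bigD1 (oracle_flip x s)) //= flipK eqxx mul1r.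
rewrite big1 ?addr0 // => t ts; case: eqP => [E|]; last by rewrite mul0r.
by move: ts; rewrite E flipK eqxx.
Qed.

Lemma flip2_same n m x y (s : qbasis n m) :
  x s.1.1.1 s.1.1.2 = y s.1.1.1 s.1.1.2 -> oracle_flip y (oracle_flip x s) = s.
Proof. by case: s => [[[i j] b] w] /= ->; rewrite addbK. Qed.

Lemma flip2K n m x y : involutive (fun s : qbasis n m => oracle_flip y (oracle_flip x s)).
Proof.
case=> [[[i j] b] w] /=; congr (_, _, _, _).
by rewrite -!addbA (addbC (y i j)) !addbA addbK addbK.
Qed.

Lemma oracle_step n m x y (v w : qvec (qbasis n m)) (l : 'I_n -> 'I_n -> algC) :
 (forall i j, 0 < l i j) ->
 `|ip (qapply (qoracle x) v) (qapply (qoracle y) w) - ip v w| <=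
 \sum_s (x s.1.1.1 s.1.1.2 != y s.1.1.1 s.1.1.2)%:R *
    (l s.1.1.1 s.1.1.2 * `|v s| ^+ 2 + (l s.1.1.1 s.1.1.2)^-1 * `|w s| ^+ 2).
Proof.
move=> lpos.
set g := fun s : qbasis n m => oracle_flip y (oracle_flip x s).
set d := fun s : qbasis n m => (x s.1.1.1 s.1.1.2 != y s.1.1.1 s.1.1.2)%:R : algC.
set L := fun s : qbasis n m => l s.1.1.1 s.1.1.2.
have gij s : (g s).1.1 = s.1.1 by rewrite /g !flip_ij.
have dg s : d (g s) = d s by rewrite /d gij.
have Lg s : L (g s) = L s by rewrite /L gij.
have d0 s : 0 <= d s by rewrite /d ler0n.
have Lp s : 0 < L s by apply: lpos.
have E : ip (qapply (qoracle x) v) (qapply (qoracle y) w) - ip v w =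
   \sum_s d s * ((v s)^* * (w (g s) - w s)).
  rewrite /ip (reindex_inj (can_inj (@flipK n m x))) -sumrB; apply: eq_bigr => s _.
  rewrite !qapply_oracle flipK /d.
  case: eqP => [exy|_]; last by rewrite mul1r mulrBr.
  by rewrite /g flip2_same // subrr mul0r.
rewrite E.
have H1 : `|\sum_s d s * ((v s)^* * (w (g s) - w s))| <=
   \sum_s d s * (`|v s| * `|w (g s)|) + \sum_s d s * (`|v s| * `|w s|).
  rewrite -big_split /=; apply: le_trans (ler_norm_sum _ _ _) _.
  apply: ler_sum => s _; rewrite normrM ger0_norm // -mulrDr.
  apply: ler_wpM2l => //; rewrite normrM norm_conjC -mulrDr.
  by apply: ler_wpM2l => //; apply: ler_normB.
have H2 : forall u : qvec (qbasis n m), 2 * \sum_s d s * (`|v s| * `|u s|) <=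
   \sum_s d s * (L s * `|v s| ^+ 2 + (L s)^-1 * `|u s| ^+ 2).
  move=> u; rewrite big_distrr /=; apply: ler_sum => s _.
  rewrite mulrCA; apply: ler_wpM2l => //; exact: amgm.
have H3 : \sum_s d s * (L s * `|v s| ^+ 2 + (L s)^-1 * `|w (g s)| ^+ 2) =
          \sum_s d s * (L s * `|v s| ^+ 2 + (L s)^-1 * `|w s| ^+ 2).
  rewrite !(eq_bigr _ (fun s _ => mulrDr _ _ _)) !big_split /=; congr (_ + _).
  rewrite (reindex_inj (can_inj (flip2K x y))) /=; apply: eq_bigr => s _.
  have gK : forall s, g (g s) = s by apply: flip2K.
  by rewrite dg Lg gK.
apply: le_trans H1 _.
rewrite -(ler_pM2l (_ : 0 < 2)) // mulrDr.
apply: le_trans (lerD (H2 _) (H2 _)) _.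
by rewrite H3 mulr2n mulrDl mul1r.
Qed.

Local Close Scope ring_scope.

Lemma sum_eq1 n (i : 'I_n) : \sum_(a : 'I_n) ((a == i) : nat) = 1%N.
Proof. by rewrite (bigD1 i) //= eqxx big1 // => a /negbTE ->. Qed.

Lemma sum_peq1 n (p : 'S_n) (j : 'I_n) : \sum_(b : 'I_n) ((p b == j) : nat) = 1%N.
Proof.
rewrite (reindex_inj (h := p^-1%g) (@perm_inj _ _)) /=.
by under eq_bigr do rewrite permKV; apply: sum_eq1.
Qed.

Lemma sum_const_n n (c : nat) : \sum_(b : 'I_n) c = (n * c)%N.
Proof. by rewrite sum_nat_const card_ord. Qed.

Lemma count_true n (p : 'S_n) (i j : 'I_n) : p i == j ->
  (\sum_a \sum_b ((a != b) && ((p i == j) != (p (tperm a b i) == j)) : nat)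
     <= 2 * n)%N.
Proof.
move=> hp.
apply: (@leq_trans (\sum_(a : 'I_n) \sum_(b : 'I_n) ((a == i) + (b == i)))%N).
  apply: leq_sum => a _; apply: leq_sum => b _.
  case: tpermP => [->|->|nia nib]; rewrite ?eqxx ?addn1 ?add1n.
  - by case: (_ && _).
  - by case: (_ && _).
  - by rewrite andbF.
rewrite (eq_bigr (fun a => n * (a == i) + 1)%N).
  by rewrite big_split /= -big_distrr /= sum_eq1 sum_const_n !muln1 addnn -mul2n.
by move=> a _; rewrite big_split /= sum_eq1 sum_const_n.
Qed.

Lemma count_false n (p : 'S_n) (i j : 'I_n) : p i != j ->
  (\sum_a \sum_b ((a != b) && ((p i == j) != (p (tperm a b i) == j)) : nat)
     <= 2)%N.
Proof.
move=> hp.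
apply: (@leq_trans (\sum_(a : 'I_n) \sum_(b : 'I_n)
   (((a == i) && (p b == j)) + ((b == i) && (p a == j))))%N).
  apply: leq_sum => a _; apply: leq_sum => b _.
  rewrite (negbTE hp) /=.
  case: tpermP => [->|->|nia nib]; rewrite ?eqxx /=.
  - by case: (a != b); case: (p b == j); rewrite ?leq_addr.
  - by case: (a != b); case: (p a == j); rewrite ?leq_addl.
  - by rewrite (negbTE hp) andbF.
rewrite (eq_bigr (fun a => (a == i) + (p a == j))%N).
  by rewrite big_split /= sum_eq1 sum_peq1.
move=> a _; rewrite big_split /=; congr (_ + _)%N.
  by case: (a == i); rewrite /= ?sum_peq1 // big1.
rewrite (eq_bigr (fun b => (b == i) * (p a == j))%N).
  by rewrite -big_distrl /= sum_eq1 mul1n.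
by move=> b _; case: (b == i); case: (p a == j).
Qed.


Local Open Scope ring_scope.

Definition wt n (r : algC) (x : 'I_n -> 'I_n -> bool) i j := if x i j then r^-1 else r.

Lemma count_alg n (p : 'S_n) (i j : 'I_n) (r : algC) : 0 < r -> r ^+ 2 = n%:R ->
  \sum_(a : 'I_n) \sum_(b : 'I_n) (a != b)%:R *
    ((perm_matrix p i j != perm_matrix (tperm a b * p)%g i j)%:R
       * wt r (perm_matrix p) i j) <= 2 * r.
Proof.
move=> r0 r2.
have -> : \sum_(a : 'I_n) \sum_(b : 'I_n) (a != b)%:R *
    ((perm_matrix p i j != perm_matrix (tperm a b * p)%g i j)%:R
       * wt r (perm_matrix p) i j) =
   (\sum_a \sum_b ((a != b) && ((p i == j) != (p (tperm a b i) == j)) : nat))%:R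
     * wt r (perm_matrix p) i j.
  rewrite natr_sum big_distrl /=; apply: eq_bigr => a _.
  rewrite natr_sum big_distrl /=; apply: eq_bigr => b _.
  by rewrite /perm_matrix permM mulrA -natrM mulnb.
rewrite /wt /perm_matrix; case: ifP => hp.
  have := count_true hp; rewrite -(ler_nat algC) => H.
  have rnz : r != 0 by rewrite gt_eqF.
  have r1 : 0 <= r^-1 by rewrite invr_ge0 ltW.
  rewrite hp in H; apply: le_trans (ler_wpM2r r1 H) _.
  by rewrite natrM -r2 expr2 mulrA mulfK.
have := count_false (negbT hp); rewrite -(ler_nat algC) hp => H.
by apply: ler_wpM2r => //; rewrite ltW.
Qed.

Lemma final_bound (S : finType) (v w : qvec S) (P : pred S) :
  nrm v = 1 -> nrm w = 1 ->
  2%:R / 3%:R <= \sum_(s | P s) `|v s| ^+ 2 ->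
  2%:R / 3%:R <= \sum_(s | ~~ P s) `|w s| ^+ 2 ->
  `|ip v w| <= 17%:R / 18%:R.
Proof.
move=> nv nw hA hB.
set t : algC := 2%:R / 3%:R.
have t0 : 0 < t by rewrite /t divr_gt0 ?ltr0n.
have ti0 : 0 < t^-1 by rewrite invr_gt0.
set A := \sum_(s | P s) `|v s| ^+ 2.
set A' := \sum_(s | ~~ P s) `|v s| ^+ 2.
set B := \sum_(s | P s) `|w s| ^+ 2.
set B' := \sum_(s | ~~ P s) `|w s| ^+ 2.
have eA : A' = 1 - A by rewrite -nv /nrm (bigID P) /= addrC addrK.
have eB : B = 1 - B' by rewrite -nw /nrm (bigID P) /= addrK.
have H1 : `|ip v w| <= \sum_s `|v s| * `|w s|.
  apply: le_trans (ler_norm_sum _ _ _) _; apply: ler_sum => s _.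
  by rewrite normrM norm_conjC.
have H2 : 2 * \sum_s `|v s| * `|w s| <=
   \sum_s (if P s then t * `|v s| ^+ 2 + t^-1 * `|w s| ^+ 2
           else t^-1 * `|v s| ^+ 2 + t * `|w s| ^+ 2).
  rewrite big_distrr /=; apply: ler_sum => s _.
  case: (P s); first exact: amgm.
  by rewrite -{2}(invrK t); apply: amgm.
have H3 : \sum_s (if P s then t * `|v s| ^+ 2 + t^-1 * `|w s| ^+ 2
           else t^-1 * `|v s| ^+ 2 + t * `|w s| ^+ 2) =
          t * A + t^-1 * B + (t^-1 * A' + t * B').
  rewrite (bigID P) /=; congr (_ + _).
    rewrite (eq_bigr (fun s => t * `|v s| ^+ 2 + t^-1 * `|w s| ^+ 2)); last first.
      by move=> s ->.
    by rewrite big_split /= -!big_distrr.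
  rewrite (eq_bigr (fun s => t^-1 * `|v s| ^+ 2 + t * `|w s| ^+ 2)); last first.
    by move=> s /negbTE ->.
  by rewrite big_split /= -!big_distrr.
rewrite -(ler_pM2l (_ : 0 < 2)) //; apply: le_trans (ler_wpM2l _ H1) _ => //.
apply: le_trans H2 _; rewrite H3 eA eB -subr_ge0.
have -> : 2 * (17%:R / 18%:R) - (t * A + t^-1 * (1 - B') + (t^-1 * (1 - A) + t * B'))
   = 5%:R / 6%:R * ((A - 2%:R / 3%:R) + (B' - 2%:R / 3%:R)).
  by rewrite /t; field.
apply: mulr_ge0; first by rewrite divr_ge0 ?ler0n.
by apply: addr_ge0; rewrite subr_ge0.
Qed.

Lemma ip_oracle_same n m x (v w : qvec (qbasis n m)) :
  ip (qapply (qoracle x) v) (qapply (qoracle x) w) = ip v w.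
Proof.
rewrite /ip (reindex_inj (can_inj (@flipK n m x))); apply: eq_bigr => s _.
by rewrite !qapply_oracle flipK.
Qed.

Lemma nrm_run n m (U : nat -> qop (qbasis n m)) s0 x T :
  (forall k, (k <= T)%N -> qunitary (U k)) ->
  forall k, (k <= T)%N -> nrm (qrun U s0 x k) = 1.
Proof.
move=> hU; elim=> [|k IH] hk.
  rewrite -ip_self /= ip_unitary; last exact: hU.
  rewrite ip_self /nrm (bigD1 s0) //=.
  rewrite /qbasis_vec eqxx normr1 expr1n big1 ?addr0 // => s /negbTE ->.
  by rewrite normr0 expr0n.
rewrite -ip_self /= ip_unitary; last exact: hU.
rewrite ip_oracle_same ip_self IH //.
exact: ltnW.
Qed.

Definition G n m (r : algC) (x y : 'I_n -> 'I_n -> bool) (v : qvec (qbasis n m)) :=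
  \sum_s (x s.1.1.1 s.1.1.2 != y s.1.1.1 s.1.1.2)%:R * (wt r x s.1.1.1 s.1.1.2 * `|v s| ^+ 2).

Lemma delta_bound n m (r : algC) x y (v w : qvec (qbasis n m)) : 0 < r ->
 `|ip (qapply (qoracle x) v) (qapply (qoracle y) w) - ip v w| <= G r x y v + G r y x w.
Proof.
move=> r0.
have wp : forall i j, 0 < wt r x i j by move=> i j; rewrite /wt; case: ifP; rewrite ?invr_gt0.
have := @oracle_step n m x y v w (wt r x) wp.
move=> H; apply: (le_trans H); clear H.
rewrite /G -big_split /=; apply: ler_sum => s _.
rewrite mulrDr; apply: lerD => //.
rewrite /wt; case: (x _ _); case: (y _ _); rewrite /= ?mul0r ?mul1r ?invrK //.
Qed.

Definition tp n (a b : 'I_n) (p : 'S_n) : 'S_n := (tperm a b * p)%g.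

Lemma tpK n (a b : 'I_n) : involutive (tp a b).
Proof. by move=> p; rewrite /tp mulgA tperm2 mul1g. Qed.

Lemma sum_tp n (f : 'S_n -> 'I_n -> 'I_n -> algC) :
  \sum_p \sum_a \sum_b f p a b = \sum_p \sum_a \sum_b f (tp a b p) a b.
Proof.
rewrite exchange_big [RHS]exchange_big; apply: eq_bigr => a _ /=.
rewrite exchange_big [RHS]exchange_big; apply: eq_bigr => b _ /=.
exact: (reindex_inj (can_inj (tpK a b))).
Qed.

Definition psi n m (U : nat -> qop (qbasis n m)) s0 (p : 'S_n) k :=
  qrun U s0 (perm_matrix p) k.

Definition W n m (U : nat -> qop (qbasis n m)) s0 k : algC :=
  \sum_(p : 'S_n) \sum_(a : 'I_n) \sum_(b : 'I_n)
     (a != b)%:R * `|ip (psi U s0 p k) (psi U s0 (tp a b p) k)|.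

Lemma G_sum n m (U : nat -> qop (qbasis n m)) s0 T (r : algC) k :
  (forall k, (k <= T)%N -> qunitary (U k)) -> 0 < r -> r ^+ 2 = n%:R -> (k <= T)%N ->
  \sum_(p : 'S_n) \sum_(a : 'I_n) \sum_(b : 'I_n) (a != b)%:R *
     G r (perm_matrix p) (perm_matrix (tp a b p)) (psi U s0 p k)
  <= 2 * r * (n`!)%:R.
Proof.
move=> hU r0 r2 hk.
have -> : 2 * r * (n`!)%:R = \sum_(p : 'S_n) 2 * r * nrm (psi U s0 p k).
  rewrite (eq_bigr (fun _ => 2 * r)); last by move=> p _; rewrite /psi (nrm_run _ _ hU) ?mulr1.
  by rewrite sumr_const card_Sn mulr_natr.
apply: ler_sum => p _.
set v := psi U s0 p k.
have -> : \sum_(a : 'I_n) \sum_(b : 'I_n) (a != b)%:R *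
     G r (perm_matrix p) (perm_matrix (tp a b p)) v =
   \sum_s `|v s| ^+ 2 * (\sum_(a : 'I_n) \sum_(b : 'I_n) (a != b)%:R *
    ((perm_matrix p s.1.1.1 s.1.1.2 != perm_matrix (tperm a b * p)%g s.1.1.1 s.1.1.2)%:R
       * wt r (perm_matrix p) s.1.1.1 s.1.1.2)).
  transitivity (\sum_(a : 'I_n) \sum_(b : 'I_n) \sum_s `|v s| ^+ 2 * ((a != b)%:R *
    ((perm_matrix p s.1.1.1 s.1.1.2 != perm_matrix (tperm a b * p)%g s.1.1.1 s.1.1.2)%:R
       * wt r (perm_matrix p) s.1.1.1 s.1.1.2))).
    apply: eq_bigr => a _; apply: eq_bigr => b _.
    rewrite /G big_distrr /=; apply: eq_bigr => s _; rewrite /tp; ring.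
  rewrite (eq_bigr (fun a => \sum_s \sum_(b : 'I_n) `|v s| ^+ 2 * ((a != b)%:R *
    ((perm_matrix p s.1.1.1 s.1.1.2 != perm_matrix (tperm a b * p)%g s.1.1.1 s.1.1.2)%:R
       * wt r (perm_matrix p) s.1.1.1 s.1.1.2)))); last by move=> a _; rewrite exchange_big.
  rewrite exchange_big /=; apply: eq_bigr => s _.
  rewrite big_distrr /=; apply: eq_bigr => a _.
  by rewrite big_distrr.
rewrite /nrm big_distrr /= ; apply: ler_sum => s _.
have H := count_alg p s.1.1.1 s.1.1.2 r0 r2.
have H2 := ler_wpM2r (exprn_ge0 2 (normr_ge0 (v s))) H.
by rewrite [X in X <= _]mulrC.
Qed.

Lemma W_step n m (U : nat -> qop (qbasis n m)) s0 T (r : algC) k :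
  (forall k, (k <= T)%N -> qunitary (U k)) -> 0 < r -> r ^+ 2 = n%:R -> (k < T)%N ->
  W U s0 k <= W U s0 k.+1 + 4%:R * r * (n`!)%:R.
Proof.
move=> hU r0 r2 hk.
have E1 p q : ip (psi U s0 p k.+1) (psi U s0 q k.+1) =
   ip (qapply (qoracle (perm_matrix p)) (psi U s0 p k))
      (qapply (qoracle (perm_matrix q)) (psi U s0 q k)).
  by rewrite /psi /= ip_unitary //; apply: hU.
set g1 := fun p a b => (a != b)%:R *
     G r (perm_matrix p) (perm_matrix (tp a b p)) (psi U s0 p k).
set g2 := fun p a b => (a != b)%:R *
     G r (perm_matrix (tp a b p)) (perm_matrix p) (psi U s0 (tp a b p) k).
have S1 : W U s0 k <= \sum_(p : 'S_n) \sum_(a : 'I_n) \sum_(b : 'I_n)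
   ((a != b)%:R * `|ip (psi U s0 p k.+1) (psi U s0 (tp a b p) k.+1)| + (g1 p a b + g2 p a b)).
  apply: ler_sum => p _; apply: ler_sum => a _; apply: ler_sum => b _.
  rewrite /g1 /g2 -!mulrDr; apply: ler_wpM2l; first exact: ler0n.
  rewrite E1.
  set x := ip (psi U s0 p k) _.
  set y := ip _ _.
  have ex : x = y - (y - x) by rewrite opprB addrC subrK.
  rewrite {1}ex; apply: le_trans (ler_normB _ _) _; apply: lerD => //.
  exact: delta_bound.
have S2 : \sum_(p : 'S_n) \sum_(a : 'I_n) \sum_(b : 'I_n)
   ((a != b)%:R * `|ip (psi U s0 p k.+1) (psi U s0 (tp a b p) k.+1)| + (g1 p a b + g2 p a b))
   = W U s0 k.+1 + (\sum_p \sum_a \sum_b g1 p a b + \sum_p \sum_a \sum_b g2 p a b).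
  rewrite /W -!big_split /=; apply: eq_bigr => p _.
  rewrite -!big_split /=; apply: eq_bigr => a _.
  by rewrite -!big_split.
have S3 : \sum_p \sum_a \sum_b g2 p a b = \sum_p \sum_a \sum_b g1 p a b.
  rewrite sum_tp; apply: eq_bigr => p _; apply: eq_bigr => a _; apply: eq_bigr => b _.
  by rewrite /g1 /g2 tpK.
apply: le_trans S1 _; rewrite S2 S3 lerD2l.
have H := G_sum s0 hU r0 r2 (ltnW hk).
apply: le_trans (lerD H H) _.
by rewrite -mulrDl -mulrDl -natrD.
Qed.

Lemma sum_neq n (a : 'I_n) : (\sum_(b : 'I_n) ((a != b) : nat))%N = n.-1.
Proof.
have H : (\sum_(b : 'I_n) ((a == b) + (a != b)))%N = n.
  rewrite (eq_bigr (fun _ => 1%N)); first by rewrite sum_const_n muln1.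
  by move=> b _; case: (a == b).
rewrite big_split /= (eq_bigr (fun b => (b == a) : nat)) in H; last by move=> b _; rewrite eq_sym.
by rewrite sum_eq1 in H; rewrite -[in RHS]H.
Qed.

Definition Msum n : algC := \sum_(p : 'S_n) \sum_(a : 'I_n) \sum_(b : 'I_n) (a != b)%:R.

Lemma MsumE n : Msum n = (n`! * (n * n.-1))%:R.
Proof.
rewrite /Msum (eq_bigr (fun _ => (n * n.-1)%:R)).
  rewrite sumr_const (_ : #|_| = n`!); last exact: card_Sn.
  by rewrite -mulrnA mulnC.
move=> p _; rewrite (eq_bigr (fun _ => n.-1%:R)).
  rewrite sumr_const (_ : #|_| = n); last exact: card_ord.
  by rewrite -mulrnA mulnC.
by move=> a _; rewrite -natr_sum sum_neq.
Qed.

Lemma W0 n m (U : nat -> qop (qbasis n m)) s0 T :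
  (forall k, (k <= T)%N -> qunitary (U k)) -> W U s0 0 = Msum n.
Proof.
move=> hU; rewrite /W /Msum; apply: eq_bigr => p _; apply: eq_bigr => a _.
apply: eq_bigr => b _.
have -> : psi U s0 (tp a b p) 0 = psi U s0 p 0 by [].
by rewrite ip_self /psi (nrm_run _ _ hU) // normr1 mulr1.
Qed.

Lemma WT n m T (U : nat -> qop (qbasis n m)) s0 out :
  computes_perm_sign T U s0 out -> W U s0 T <= 17%:R / 18%:R * Msum n.
Proof.
move=> [hU hp]; rewrite /W /Msum !big_distrr /=; apply: ler_sum => p _.
apply: ler_sum => a _; rewrite big_distrr /=; apply: ler_sum => b _.
case: eqP => [->|/eqP ab]; first by rewrite /= mul0r mulr0.
rewrite /= mul1r mulr1.
apply: (@final_bound _ _ _ (fun s => out s == odd_perm p)).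
- by rewrite /psi (nrm_run _ _ hU).
- by rewrite /psi (nrm_run _ _ hU).
- exact: hp.
have := hp (tp a b p); rewrite /qprob /tp odd_mul_tperm ab /=.
move=> H; apply: le_trans H _; rewrite le_eqVlt; apply/orP; left; apply/eqP.
by apply: eq_bigl => s; case: (out s); case: (odd_perm p).
Qed.

Lemma nat_bound n m T (U : nat -> qop (qbasis n m)) s0 out :
  (2 <= n)%N -> computes_perm_sign T U s0 out ->
  ((n * n.-1) ^ 2 <= 5184 * T ^ 2 * n)%N.
Proof.
move=> hn hc; have hU := hc.1.
set r := sqrtC (n%:R : algC).
have r0 : 0 < r by rewrite sqrtC_gt0 ltr0n; lia.
have r2 : r ^+ 2 = n%:R by rewrite sqrtCK.
set X := 4%:R * r * (n`!)%:R.
have Ind : forall k, (k <= T)%N -> W U s0 0 <= W U s0 k + k%:R * X.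
  elim=> [|k IH] hk; first by rewrite mul0r addr0.
  apply: le_trans (IH (ltnW hk)) _.
  have := W_step s0 hU r0 r2 hk; rewrite -/X => Hs.
  apply: le_trans (lerD Hs (lexx _)) _.
  have -> : (k.+1)%:R = k%:R + 1 :> algC by rewrite natr1.
  by rewrite le_eqVlt; apply/orP; left; apply/eqP; ring.
have H := Ind T (leqnn T); rewrite (W0 s0 hU) in H.
have H2 := WT hc.
have H3 : Msum n <= 17%:R / 18%:R * Msum n + T%:R * X := le_trans H (lerD H2 (lexx _)).
rewrite -lerBlDl in H3.
have e1 : Msum n - 17%:R / 18%:R * Msum n = (n`!)%:R * ((n * n.-1)%:R / 18%:R).
  by rewrite MsumE natrM; field.
have e2 : T%:R * X = (n`!)%:R * (4%:R * T%:R * r) by rewrite /X; ring.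
rewrite e1 e2 ler_pM2l ?ltr0n ?fact_gt0 // in H3.
rewrite -(ler_pM2r (_ : 0 < 18%:R)) ?ltr0n // mulfVK ?pnatr_eq0 // in H3.
have nn : 4%:R * T%:R * r * 18%:R \in Num.nneg.
  by rewrite qualifE /= !mulr_ge0 ?ler0n // ltW.
have H4 := lerXn2r 2 (ler0n _ _) nn H3.

have e3 : (4%:R * T%:R * r * 18%:R) ^+ 2 = 5184%:R * T%:R ^+ 2 * n%:R :> algC.
  rewrite -r2; ring.
rewrite e3 -!natrX -!natrM ler_nat in H4.
exact: H4.
Qed.

Lemma nat_final n T K : (2 <= n)%N -> ((n * n.-1) ^ 2 <= K * T ^ 2 * n)%N ->
  (n ^ 3 <= 4 * K * T ^ 2)%N.
Proof.
move=> hn h.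
have h1 : (n * (n * n.-1 ^ 2) <= n * (K * T ^ 2))%N.
  by move: h; rewrite expnMn !expnS expn0; rewrite !mulnA; lia.
rewrite leq_pmul2l in h1; last lia.
have h2 : (n ^ 2 <= 4 * n.-1 ^ 2)%N.
  have : (n <= 2 * n.-1)%N by lia.
  move=> h3; have := leq_mul h3 h3; rewrite !expnS expn0; lia.
have h4 : (n ^ 3 <= n * (4 * n.-1 ^ 2))%N.
  by rewrite (expnS n 2) leq_pmul2l //; lia.
apply: leq_trans h4 _.
rewrite mulnCA -!mulnA leq_mul2l /=.
exact: h1.
Qed.

Lemma scale_lemma (K x y : rat) : x <= K ^+ 2 * y -> K != 0 -> K^-1 ^+ 2 * x <= y.
Proof.
move=> h Kn.
have c0 : 0 <= K^-1 ^+ 2 by apply: sqr_ge0.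
apply: le_trans (ler_wpM2l c0 h) _.
by rewrite mulrA -exprMn (mulVf Kn) expr1n mul1r.
Qed.

Theorem mainTheorem10 :
  exists (c : rat) (N : nat), 0 < c /\
    forall (n m T : nat) (U : nat -> qop (qbasis n m)) (s0 : qbasis n m)
           (out : qbasis n m -> bool),
      (N <= n)%N -> computes_perm_sign T U s0 out ->
      c ^+ 2 * (n ^ 3)%:R <= (T ^ 2)%:R.
Proof.
exists (144%:R^-1), 2%N; split; first by rewrite invr_gt0 ltr0n.
move=> n m T U s0 out hn hc.
have h := @nat_final n T _ hn (nat_bound hn hc).
rewrite (_ : (4 * 5184)%N = 144 ^ 2)%N // in h.
have h' : (n ^ 3)%:R <= (144%:R ^+ 2 * (T ^ 2)%:R : rat).
  by rewrite -natrX -natrM ler_nat.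
have nz : (144%:R : rat) != 0 by rewrite pnatr_eq0; exact: isT.
exact: (@scale_lemma _ _ _ h' nz).
Qed.
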